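(* Let $\mathcal I$ be an instance of the a priori TRP on a metric $(V,d)$ with root $r$, $n=|V|$, and probabilities $p_v\ge 1/n^2$ for all $v\in V$. Let $p=\frac1n\min_{v\in V}p_v$ and let $\mathcal J$ be the uniform instance obtained by replacing each $v\in V$ by a set $S_v$ of $t_v=\lceil p_v/p\rceil$ co-located copies of $v$ (distance $0$ within $S_v$, distance $d(u,v)$ between any copy of $u$ and any copy of $v$), each copy independently active with probability $p$. Let $\widehat\pi$ be any consecutive master tour on $\mathcal J$, i.e. one visiting all vertices of each $S_v$ consecutively, with expected latency $\mathrm{ALG}(\mathcal J)$, and let $\pi$ be the master tour on $V$ visiting the vertices $v$ in the order in which the groups $S_v$ are visited by $\widehat\pi$. Then the expected latency $\mathrm{ALG}(\mathcal I)$ of $\pi$ on $\mathcal I$ satisfies $$\mathrm{ALG}(\mathcal I)\le\left(\frac{e}{e-1}\right)^3\left(1+\frac1n\right)^3\mathrm{ALG}(\mathcal J).$$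
   Context: An instance of the a priori TRP consists of a finite metric $(V,d)$, a root $r$, and independent activation probabilities $p_v$. A master tour is a tour from $r$ visiting all vertices; for a random active set $A$ (each $v$ independently active with probability $p_v$), the tour is shortcut to $A$, the latency of $v\in A$ is its distance from $r$ along the shortcut tour, and the expected latency of the master tour is the expected sum of latencies of active vertices. *)

(* Defs.v *)
From HB Require Import structures.
From mathcomp Require Import all_boot all_order all_algebra.
From mathcomp Require Import reals sequences exp.
Set Implicit Arguments. Unset Strict Implicit. Unset Printing Implicit Defensive.
Import Order.TTheory GRing.Theory Num.Theory.
Local Open Scope ring_scope.

Section TRP.
Variables (R : realType) (V : finType) (d : V -> V -> R).

Definition is_metric : Prop :=
  [/\ forall x y, 0 <= d x y,
      forall x y, d x y = 0 <-> x = y,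
      forall x y, d x y = d y x &
      forall x y z, d x z <= d x y + d y z].

Fixpoint walk_len (x : V) (s : seq V) : R :=
  match s with [::] => 0 | y :: s' => d x y + walk_len y s' end.

Variables (T : finType) (loc : T -> V) (r : V).

Definition master_tour (s : seq T) : Prop := perm_eq s (enum T).

(* latency of u in the tour s shortcut to the active set A:
   distance from r along r -> (active vertices in tour order) up to u *)
Definition latency (s : seq T) (A : {set T}) (u : T) : R :=
  let sA := [seq x <- s | x \in A] in
  walk_len r (map loc (take (index u sA).+1 sA)).

Definition prob_set (q : T -> R) (A : {set T}) : R :=
  (\prod_(v in A) q v) * \prod_(v in ~: A) (1 - q v).

Definition exp_latency (q : T -> R) (s : seq T) : R :=
  \sum_(A : {set T}) prob_set q A * \sum_(u in A) latency s A u.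

End TRP.

Section Uniform.
Variables (R : realType) (V : finType) (pr : V -> R).

(* p = (1/n) min_v p_v   (all p_v <= 1, so the min with 1 is harmless) *)
Definition unif_p : R := (\big[Num.min/1]_(v : V) pr v) / #|V|%:R.

Definition ncopies (v : V) : nat := `|Num.ceil (pr v / unif_p)|%N.

Definition copyT : finType := {v : V & 'I_(ncopies v)}.

Definition copy_loc (x : copyT) : V := tag x.

Definition copy_prob (x : copyT) : R := unif_p.

Definition consecutive (s : seq copyT) : Prop :=
  forall i j k, (i <= j)%N -> (j <= k)%N -> (k < size s)%N ->
    forall x0 : copyT,
    tag (nth x0 s i) = tag (nth x0 s k) -> tag (nth x0 s j) = tag (nth x0 s i).

Definition induced_tour (s : seq copyT) : seq V := undup (map tag s).

End Uniform.

(* Main.v *)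
Require Import Defs.
From HB Require Import structures.
From mathcomp Require Import all_boot all_order all_algebra.
From mathcomp Require Import reals sequences exp.
From mathcomp Require Import ring lra zify.
Import Order.TTheory GRing.Theory Num.Theory.
Local Open Scope ring_scope.
Set Implicit Arguments. Unset Strict Implicit. Unset Printing Implicit Defensive.

Section Prob.
Variables (R : realType) (T : finType) (q : T -> R).

Lemma prob_set_sum1 : \sum_(A : {set T}) prob_set q A = 1.
Proof.
transitivity (\prod_(i : T) (q i + (1 - q i))).
  rewrite bigA_distr; apply: eq_bigr => A _.
  rewrite /prob_set [RHS](bigID (mem A)) /=; congr (_ * _).
    by apply: eq_bigr => i ->.
  apply: eq_big => [i|i]; first by rewrite in_setC.
  by rewrite in_setC => /negbTE ->.
by rewrite big1 // => i _; rewrite addrC subrK.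
Qed.

Lemma setD1_id {x : T} {A : {set T}} : x \notin A -> A :\ x = A.
Proof.
move=> xA; apply/setP => y; rewrite in_setD1; case: eqP => // ->.
by rewrite (negbTE xA).
Qed.

Lemma sum_toggle (x : T) (G : {set T} -> R) :
  \sum_(A : {set T}) G A = \sum_(A : {set T} | x \notin A) (G (x |: A) + G A).
Proof.
rewrite (bigID (fun A : {set T} => x \in A)) /= [RHS]big_split /=; congr (_ + _).
pose tau (A : {set T}) : {set T} := if x \in A then A :\ x else x |: A.
have tauK : involutive tau.
  move=> A; rewrite /tau; case: (boolP (x \in A)) => xA.
    by rewrite setD11 setD1K.
  by rewrite setU11 setU1K.
rewrite (reindex_inj (inv_inj tauK)) /=; apply: eq_big => A.
  by rewrite /tau; case: (boolP (x \in A)) => xA; rewrite ?setD11 ?setU11.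
by rewrite /tau; case: (boolP (x \in A)) => xA //; rewrite setD11.
Qed.

Definition Rm (x : T) (A : {set T}) : R :=
  (\prod_(v | (v \in A) && (v != x)) q v) * \prod_(v | (v \notin A) && (v != x)) (1 - q v).

Lemma RmU1 (x : T) (A : {set T}) : Rm x (x |: A) = Rm x A.
Proof.
rewrite /Rm; congr (_ * _); apply: eq_bigl => v; rewrite !inE;
  by case: (boolP (v == x)) => /= h; rewrite ?andbF ?andbT.
Qed.

Lemma prob_in {x : T} {A : {set T}} : x \in A -> prob_set q A = q x * Rm x A.
Proof.
move=> xA; rewrite /prob_set (bigD1 x) //= -mulrA /Rm; congr (_ * (_ * _)).
apply: eq_bigl => v; rewrite in_setC; case: eqP => [->|]; by rewrite ?xA ?andbT.
Qed.

Lemma prob_out {x : T} {A : {set T}} : x \notin A -> prob_set q A = (1 - q x) * Rm x A.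
Proof.
move=> xA; rewrite /prob_set (bigD1 x (P := mem (~: A))) /=; last by rewrite in_setC.
rewrite /Rm mulrCA; congr (_ * (_ * _)).
  by apply: eq_bigl => v; case: eqP => [->|]; rewrite ?(negbTE xA) ?andbT.
by apply: eq_bigl => v; rewrite in_setC.
Qed.

Lemma resample (x : T) (F : {set T} -> R) :
  \sum_(A : {set T}) prob_set q A * F A =
  \sum_(A : {set T}) prob_set q A * (q x * F (x |: A) + (1 - q x) * F (A :\ x)).
Proof.
rewrite (sum_toggle x) [RHS](sum_toggle x); apply: eq_bigr => A xA.
rewrite (prob_in (setU11 x A)) (prob_out xA) RmU1 (setU1K xA) (setD1_id xA).
rewrite setUA setUid.
ring.
Qed.

Lemma sum_const_prob (c : R) : \sum_(A : {set T}) prob_set q A * c = c.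
Proof. by rewrite -big_distrl /= prob_set_sum1 mul1r. Qed.

End Prob.
Section Walk.
Variables (R : realType) (V : finType) (d : V -> V -> R).

Fixpoint gen (x : V) (l : seq (V * R)) (w : V) : R :=
  match l with
  | [::] => d x w
  | (y, c) :: l' => c * (d x y + gen y l' w) + (1 - c) * gen x l' w
  end.

Variables (T : finType) (loc : T -> V) (q : T -> R).

Lemma E_walk (l : seq T) : uniq l -> forall x w,
  \sum_(A : {set T}) prob_set q A *
     walk_len d x (map loc [seq y <- l | y \in A] ++ [:: w])
  = gen x [seq (loc y, q y) | y <- l] w.
Proof.
elim: l => [|a l IH] /= Hu x w.
  by rewrite addr0 sum_const_prob.
case/andP: Hu => al ul.
have fU : forall A : {set T}, [seq y <- l | y \in a |: A] = [seq y <- l | y \in A].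
  move=> A; apply: eq_in_filter => y yl; rewrite in_setU1.
  by case: eqP => // ya; move: al; rewrite -ya yl.
have fD : forall A : {set T}, [seq y <- l | y \in A :\ a] = [seq y <- l | y \in A].
  move=> A; apply: eq_in_filter => y yl; rewrite in_setD1.
  by case: eqP => // ya; move: al; rewrite -ya yl.
rewrite (resample q a).
transitivity (\sum_(A : {set T}) ((q a * d x (loc a)) * prob_set q A
   + q a * (prob_set q A * walk_len d (loc a) (map loc [seq y <- l | y \in A] ++ [:: w]))
   + (1 - q a) * (prob_set q A * walk_len d x (map loc [seq y <- l | y \in A] ++ [:: w])))).
  apply: eq_bigr => A _.
  rewrite setU11 setD11 /= fU fD; ring.
rewrite !big_split /= -!big_distrr /= prob_set_sum1 !IH //.
ring.
Qed.

End Walk.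
Section Dec.
Variables (R : realType) (V : finType) (d : V -> V -> R).
Variables (T : finType) (loc : T -> V) (r : V) (q : T -> R).

Lemma latency_U1 (s : seq T) (A : {set T}) (u : T) : u \in s ->
  latency d loc r s (u |: A) u =
  walk_len d r (map loc [seq y <- take (index u s) s | y \in A] ++ [:: loc u]).
Proof.
move=> us; rewrite /latency.
have upre : u \notin take (index u s) s by rewrite in_take // ltnn.
have iS : (index u s < size s)%N by rewrite index_mem.
have Es : s = take (index u s) s ++ u :: drop (index u s).+1 s.
  by rewrite -[X in X = _](cat_take_drop (index u s) s) (drop_nth u iS) nth_index.
have fpre : [seq y <- take (index u s) s | y \in u |: A] = [seq y <- take (index u s) s | y \in A].
  apply: eq_in_filter => y yl; rewrite in_setU1.
  by case: eqP => // yu; rewrite yu in yl; rewrite yl in upre.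
rewrite {1 2}Es filter_cat /= setU11 fpre.
set f := [seq y <- take (index u s) s | y \in A].
have uf : u \notin f by rewrite mem_filter negb_and upre orbT.
rewrite index_cat (negbTE uf) /= eqxx addn0 take_cat ltnNge leqnSn /= subSnn /= take0.
by rewrite map_cat.
Qed.

Lemma exp_lat_dec (s : seq T) : uniq s -> (forall u, u \in s) ->
  exp_latency d loc r q s =
  \sum_(u : T) q u * gen d r [seq (loc y, q y) | y <- take (index u s) s] (loc u).
Proof.
move=> us alls; rewrite /exp_latency.
transitivity (\sum_(A : {set T}) \sum_(u : T) prob_set q A *
                 (if u \in A then latency d loc r s A u else 0)).
  apply: eq_bigr => A _; rewrite big_mkcond big_distrr /=.
  by apply: eq_bigr => u _; case: (u \in A); rewrite ?mulr0.
rewrite exchange_big; apply: eq_bigr => u _ /=.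
rewrite (resample q u).
transitivity (q u * \sum_(A : {set T}) prob_set q A *
   walk_len d r (map loc [seq y <- take (index u s) s | y \in A] ++ [:: loc u])).
  rewrite big_distrr; apply: eq_bigr => A _ /=.
  by rewrite setU11 setD11 mulr0 addr0 latency_U1 // mulrCA.
by rewrite E_walk // take_uniq.
Qed.

End Dec.
Section Gen.
Variables (R : realType) (V : finType) (d : V -> V -> R).
Hypothesis dge0 : forall x y, 0 <= d x y.
Hypothesis dxx : forall x, d x x = 0.
Hypothesis dsym : forall x y, d x y = d y x.
Hypothesis dtri : forall x y z, d x z <= d x y + d y z.

Definition okl (l : seq (V * R)) := all (fun c : V * R => (0 <= c.2) && (c.2 <= 1)) l.

Lemma gen_ge0 l : okl l -> forall x w, 0 <= gen d x l w.
Proof.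
elim: l => [|[y c] l IH] /= ok x w; first exact: dge0.
case/andP: ok => /andP [c0 c1] ok.
have h1 := IH ok y w; have h2 := IH ok x w; have h3 := dge0 x y.
have -> : 0 = c * 0 + (1 - c) * 0 by ring.
by apply: lerD; apply: ler_wpM2l; rewrite ?subr_ge0 ?addr_ge0.
Qed.

Lemma gen_tri l : okl l -> forall x y w, gen d x l w <= d x y + gen d y l w.
Proof.
elim: l => [|[z c] l IH] /= ok x y w; first exact: dtri.
case/andP: ok => /andP [c0 c1] ok.
have h1 := IH ok x y w; have h3 := dtri x y z.
have t1 : 0 <= c * (d x y + d y z - d x z) by apply: mulr_ge0 => //; lra.
have t2 : 0 <= (1 - c) * (d x y + gen d y l w - gen d x l w).
  by apply: mulr_ge0; lra.
nra.
Qed.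

Lemma gen_self k a p l w : gen d a (nseq k (a, p) ++ l) w = gen d a l w.
Proof. by elim: k => //= k ->; rewrite dxx; ring. Qed.

Lemma gen_run c a p l x w :
  gen d x (nseq c (a, p) ++ l) w =
  (1 - (1 - p) ^+ c) * (d x a + gen d a l w) + (1 - p) ^+ c * gen d x l w.
Proof.
elim: c => [|c IH] /=; first by rewrite expr0; ring.
by rewrite IH gen_self exprS; ring.
Qed.

Lemma gen_trail k p x w : gen d x (nseq k (w, p)) w = d x w.
Proof. by elim: k x => //= k IH x; rewrite !IH dxx; ring. Qed.

End Gen.
Section Comb.
Variables (R : realType) (V : finType) (d : V -> V -> R).
Hypothesis dge0 : forall x y, 0 <= d x y.
Hypothesis dxx : forall x, d x x = 0.
Hypothesis dsym : forall x y, d x y = d y x.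
Hypothesis dtri : forall x y z, d x z <= d x y + d y z.
Variables (p : R) (pr : V -> R) (v0 : V).
Hypothesis p0 : 0 <= p.
Hypothesis p1 : p <= 1.
Hypothesis pr0 : forall v, 0 <= pr v.
Hypothesis pr1 : forall v, pr v <= 1.

Definition consec (m : seq V) := forall i j k, (i <= j)%N -> (j <= k)%N ->
  (k < size m)%N -> nth v0 m i = nth v0 m k -> nth v0 m j = nth v0 m i.

Lemma nth_shift n a m2 i : nth v0 (nseq n a ++ m2) (n + i) = nth v0 m2 i.
Proof. by rewrite nth_cat size_nseq ltnNge leq_addr /= addKn. Qed.

Lemma run_decomp a m1 : consec (a :: m1) ->
  exists c m2, a :: m1 = nseq c.+1 a ++ m2 /\ a \notin m2 /\ consec m2.
Proof.
move=> cm; set c := find (predC1 a) m1; exists c, (drop c m1).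
have Htake : take c m1 = nseq c a.
  have sz : size (take c m1) = c by rewrite size_takel // find_size.
  rewrite -{2}sz; apply/all_pred1P; apply/(all_nthP v0) => i; rewrite sz => ic.
  rewrite nth_take //; have := before_find v0 ic => /= /negbT.
  by rewrite negbK.
have Em : a :: m1 = nseq c.+1 a ++ drop c m1 by rewrite /= -Htake cat_take_drop.
have szm : size (a :: m1) = (c.+1 + size (drop c m1))%N by rewrite {1}Em size_cat size_nseq.
have Hnth : forall i, nth v0 (a :: m1) (c.+1 + i) = nth v0 (drop c m1) i.
  by move=> i; rewrite {1}Em nth_shift.
split=> //; split.
  apply/negP => am2.
  have ks : (index a (drop c m1) < size (drop c m1))%N by rewrite index_mem.
  have cs : (c < size m1)%N by move: ks; rewrite size_drop; lia.
  have := cm 0%N c.+1 (c.+1 + index a (drop c m1))%N (leq0n _) (leq_addr _ _).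
  rewrite szm ltn_add2l Hnth nth_index // => /(_ ks erefl) /=.
  have := nth_find v0 (a := predC1 a) (s := m1); rewrite has_find -/c => /(_ cs) /=.
  by move=> /eqP.
move=> i j k ij jk ks e.
have := cm (c.+1 + i)%N (c.+1 + j)%N (c.+1 + k)%N.
rewrite !leq_add2l szm ltn_add2l !Hnth => /(_ ij jk ks e).
done.
Qed.

Lemma okl_map (f : V -> R) (l : seq V) : (forall u, 0 <= f u <= 1) ->
  okl [seq (u, f u) | u <- l].
Proof. by move=> h; rewrite /okl all_map; apply/allP => u _ /=; apply: h. Qed.

Lemma undup_nseq n (a : V) : undup (nseq n.+1 a) = [:: a].
Proof.
elim: n => //= n IH; rewrite IH.
by rewrite in_cons eqxx.
Qed.

Lemma main_comb n : forall m : seq V, (size m <= n)%N -> consec m ->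
  (forall u, u \in m -> pr u / 2 <= 1 - (1 - p) ^+ count_mem u m) ->
  forall j, (j < size m)%N -> forall x,
  gen d x [seq (u, pr u) | u <- take (index (nth v0 m j) (undup m)) (undup m)] (nth v0 m j)
  <= 3 * gen d x [seq (u, p) | u <- take j m] (nth v0 m j).
Proof.
have okp : forall l : seq V, okl [seq (u, p) | u <- l].
  by move=> l; apply: (okl_map (f := fun _ => p)) => u; rewrite p0 p1.
have okr : forall l : seq V, okl [seq (u, pr u) | u <- l] by move=> l; apply: (okl_map (f := pr)) => u; rewrite pr0 pr1.
elim: n => [|n IHn] m sz cm Qh j js x.
  by move: sz js; rewrite leqn0 => /nilP ->.
case: m sz cm Qh js => [//|a m1] sz cm Qh js.
have [c [m2 [Em [am2 cm2]]]] := run_decomp cm.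
rewrite Em in sz Qh js *.
have Eu : undup (nseq c.+1 a ++ m2) = a :: undup m2.
  by rewrite undup_cat undup_nseq /= am2.
rewrite Eu.
case: (ltnP j c.+1) => jc.
  have -> : nth v0 (nseq c.+1 a ++ m2) j = a by rewrite nth_cat size_nseq jc nth_nseq jc.
  rewrite take_cat size_nseq jc take_nseq ?(ltnW jc) //= eqxx /= map_nseq gen_trail //.
  have := dge0 x a; lra.
set j' := (j - c.+1)%N.
have Ej : j = (c.+1 + j')%N by rewrite /j' subnKC.
rewrite Ej nth_shift.
have js' : (j' < size m2)%N by move: js; rewrite Ej size_cat size_nseq ltn_add2l.
set v := nth v0 m2 j'.
have vm2 : v \in m2 by apply: mem_nth.
have va : (a == v) = false by apply/negP => /eqP av; rewrite av vm2 in am2.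
have Etk : take (c.+1 + j') (nseq c.+1 a ++ m2) = nseq c.+1 a ++ take j' m2.
  by rewrite take_cat size_nseq ifF ?addKn // ltnNge leq_addr.
have Eidx : take (index v (a :: undup m2)) (a :: undup m2) = a :: take (index v (undup m2)) (undup m2).
  by rewrite /= va.
rewrite Etk Eidx map_cat map_nseq gen_run //=.
have Qh' : forall u, u \in m2 -> pr u / 2 <= 1 - (1 - p) ^+ count_mem u m2.
  move=> u um; have := Qh u; rewrite mem_cat um orbT count_cat count_nseq /=.
  have -> : (a == u) = false by apply/negP => /eqP au; rewrite au um in am2.
  by rewrite mul0n add0n => /(_ isT).
have Qa : pr a / 2 <= 1 - (1 - p) ^+ c.+1.
  have := Qh a; rewrite mem_cat mem_nseq eqxx /= count_cat count_nseq /= eqxx.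
  by rewrite (count_memPn am2) mul1n addn0 => /(_ isT).
have sz2 : (size m2 <= n)%N by move: sz; rewrite size_cat size_nseq; lia.
have IHa := IHn m2 sz2 cm2 Qh' j' js' a.
have IHx := IHn m2 sz2 cm2 Qh' j' js' x.
rewrite -/v in IHa IHx.
set Ga := gen d a _ v in IHa *.
set Gx := gen d x _ v in IHx *.
set ha := gen d a _ v in IHa *.
set hx := gen d x _ v in IHx *.
have trh : hx <= d x a + ha by apply: gen_tri.
have trG : Ga <= d x a + Gx by rewrite dsym; apply: gen_tri.
set Q := 1 - (1 - p) ^+ c.+1 in Qa *.
have E1 : (1 - p) ^+ c.+1 = 1 - Q by rewrite /Q; ring.
rewrite E1.
have Q1 : Q <= 1 by rewrite /Q lerBlDr lerDl exprn_ge0 // subr_ge0.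
have pa0 := pr0 a; have pa1 := pr1 a; have dxa := dge0 x a.
have t1 : 0 <= (Q - pr a / 2) * (d x a + ha - hx) by apply: mulr_ge0; lra.
have t2 : 0 <= pr a * (d x a - Ga + Gx) by apply: mulr_ge0; lra.
have t3 : 0 <= (1 - pr a / 2) * (3 * hx - Gx) by apply: mulr_ge0; lra.
have t4 : 0 <= pr a * (3 * ha - Ga) by apply: mulr_ge0; lra.
nra.
Qed.

End Comb.
Lemma Qbound (R : realType) (p a : R) (t : nat) : 0 <= p -> p <= 1 ->
  0 <= a -> a <= 1 -> a <= t%:R * p -> a / 2 <= 1 - (1 - p) ^+ t.
Proof.
move=> p0 p1 a0 a1 hat.
have key : (1 + t%:R * p) * (1 - p) ^+ t <= 1.
  elim: (t) => [|k IH]; first by rewrite mul0r addr0 expr0 mulr1.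
  have y0 : 0 <= (1 - p) ^+ k by rewrite exprn_ge0 // subr_ge0.
  rewrite exprS -addn1 natrD.
  have h : (1 + (k%:R + 1) * p) * ((1 - p) * (1 - p) ^+ k)
      = (1 + k%:R * p) * (1 - p) ^+ k - (k%:R * p * p + p * p) * (1 - p) ^+ k by ring.
  rewrite h; have k0 : 0 <= k%:R :> R by [].
  have : 0 <= (k%:R * p * p + p * p) * (1 - p) ^+ k.
    by apply: mulr_ge0 => //; apply: addr_ge0; apply: mulr_ge0 => //; apply: mulr_ge0.
  lra.
have y0 : 0 <= (1 - p) ^+ t by rewrite exprn_ge0 // subr_ge0.
have t1 : 0 <= (t%:R * p - a) * (1 - p) ^+ t by apply: mulr_ge0 => //; lra.
nra.
Qed.

Lemma e_bound (R : realType) : 3 <= (expR (1 : R) / (expR 1 - 1)) ^+ 3.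
Proof.
set e := expR (1 : R).
have e1 : 1 < e by rewrite /e expR_gt1.
set y := expR (1 / 4 : R).
have y0 : 0 < y by rewrite /y expR_gt0.
have z1 : 1 + (- (1/4)) <= expR (- (1 / 4) : R) := expR_ge1Dx _.
have yz : y * expR (- (1/4)) = 1 := expRxMexpNx_1 _.
have y43 : y <= 4/3 by nra.
have ey : e = y ^+ 4.
  by rewrite /e /y -expRM_natl; congr expR; rewrite mulrC -mulrA mulVf ?mulr1 // pnatr_eq0.
have ey2 : e <= 256/81.
  rewrite ey; have y2 : y ^+ 2 <= 16/9.
    by rewrite expr2; nra.
  have : y ^+ 4 = y ^+ 2 * y ^+ 2 by rewrite -exprD.
  have : 0 <= y ^+ 2 by rewrite exprn_ge0 // ltW.
  nra.
have ge : 256/175 <= e / (e - 1).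
  by rewrite ler_pdivlMr ?subr_gt0 //; lra.
have : (256/175) ^+ 3 <= (e / (e - 1)) ^+ 3.
  by rewrite lerXn2r // ?nnegrE //; lra.
have : 3 <= (256/175 : R) ^+ 3 by rewrite !exprS expr0; lra.
lra.
Qed.
Lemma count_copies (R : realType) (V : finType) (pr : V -> R)
  (s : seq (copyT pr)) (u : V) :
  perm_eq s (enum (copyT pr)) -> count_mem u (map tag s) = ncopies pr u.
Proof.
move=> ps; rewrite count_map -sum1_count (perm_big _ ps) big_enum_cond /=.
transitivity (\sum_(v : V) \sum_(i : 'I_(ncopies pr v) | v == u) 1)%N.
  rewrite (sig_big_dep xpredT (fun v (_ : 'I_(ncopies pr v)) => v == u)) /=.
  by apply: eq_bigl => x.
rewrite (bigD1 u) //=.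
have -> : (\sum_(i < ncopies pr u | u == u) 1 = ncopies pr u)%N.
  by rewrite (eq_bigl xpredT) ?sum1_card ?card_ord // => i; rewrite eqxx.
rewrite big1 ?addn0 //.
by move=> v /negbTE vu; rewrite big_pred0 // => i; rewrite vu.
Qed.
Lemma K_ge3 (R : realType) (n : nat) :
  3 <= (expR (1 : R) / (expR 1 - 1)) ^+ 3 * (1 + 1 / n%:R) ^+ 3.
Proof.
have e3 := @e_bound R.
have b1 : 1 <= (1 + 1 / n%:R : R) ^+ 3.
  by rewrite exprn_ege1 // lerDl divr_ge0.
have a0 : 0 <= (expR (1 : R) / (expR 1 - 1)) ^+ 3 by lra.
nra.
Qed.

Unset Implicit Arguments.

Theorem lemma5 (R : realType) (V : finType) (d : V -> V -> R) (r : V)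
    (pr : V -> R) (shat : seq (copyT pr)) :
  is_metric d ->
  (forall v, 1 / (#|V|%:R ^+ 2) <= pr v /\ pr v <= 1) ->
  master_tour shat ->
  consecutive shat ->
  exp_latency d id r pr (induced_tour shat)
    <= (expR 1 / (expR 1 - 1)) ^+ 3 * (1 + 1 / #|V|%:R) ^+ 3
       * exp_latency d (@copy_loc R V pr) r (@copy_prob R V pr) shat.
Proof.
move=> [dge0 dsep dsym dtri] Hpr ms cs.
have dxx : forall x, d x x = 0 by move=> x; apply/dsep.
set p := unif_p pr.
have npos : forall v : V, (0 < #|V|)%N by move=> v; apply/card_gt0P; exists v.
have prpos : forall v, 0 < pr v.
  move=> v; apply: (lt_le_trans _ (proj1 (Hpr v))).
  by rewrite divr_gt0 // exprn_gt0 // ltr0n npos.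
have pr0 : forall v, 0 <= pr v by move=> v; apply: ltW.
have pr1 : forall v, pr v <= 1 by move=> v; case: (Hpr v).
have ppos : forall v : V, 0 < p.
  move=> v; rewrite /p /unif_p divr_gt0 ?ltr0n ?npos //.
  apply: (big_ind (fun x => 0 < x)) => //.
  by move=> x y hx hy; rewrite lt_min hx hy.
have p1 : forall v : V, p <= 1.
  move=> v; rewrite /p /unif_p ler_pdivrMr ?ltr0n ?npos // mul1r.
  apply: (@le_trans _ _ 1); last by rewrite ler1n npos.
  apply: (big_ind (fun x => x <= 1)) => //.
  by move=> x y hx hy; rewrite ge_min hx.
have tcop : forall v, pr v <= (ncopies pr v)%:R * p.
  move=> v; have pp := ppos v.
  have c0 : 0 <= Num.ceil (pr v / p).
    rewrite ceil_ge0; apply: (@lt_le_trans _ _ 0); first by rewrite oppr_lt0 ltr01.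
    by rewrite divr_ge0 // ltW.
  rewrite /ncopies natr_absz ger0_norm // -ler_pdivrMr //; exact: ceil_ge.
have tpos : forall v, (0 < ncopies pr v)%N.
  move=> v; rewrite lt0n; apply/negP => /eqP h.
  have := tcop v; rewrite h mul0r => h1.
  by have := lt_le_trans (prpos v) h1; rewrite ltxx.
have us : uniq shat by rewrite (perm_uniq ms) enum_uniq.
have alls : forall x, x \in shat by move=> x; rewrite (perm_mem ms) mem_enum.
set m := map tag shat.
have mem_it : forall v, v \in undup m.
  move=> v; rewrite mem_undup; apply/mapP.
  by exists (existT _ v (Ordinal (tpos v))).
have AJ : exp_latency d (@copy_loc R V pr) r (@copy_prob R V pr) shat =
   \sum_(x : copyT pr) p * gen d r [seq (u, p) | u <- take (index x shat) m] (tag x).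
  rewrite (exp_lat_dec _ _ _ _ us alls); apply: eq_bigr => x _.
  by rewrite /m -map_take -map_comp.
have AI : exp_latency d id r pr (induced_tour shat) =
   \sum_(v : V) pr v * gen d r [seq (u, pr u) | u <- take (index v (undup m)) (undup m)] v.
  by rewrite (exp_lat_dec _ _ _ _ (undup_uniq m) mem_it).
have hge0 : forall x : copyT pr, 0 <= gen d r [seq (u, p) | u <- take (index x shat) m] (tag x).
  move=> x; apply: gen_ge0 => //; apply: (okl_map (f := fun _ => p)) => u.
  by rewrite (ltW (ppos (tag x))) (p1 (tag x)).
have Gge0 : forall v : V, 0 <= gen d r [seq (u, pr u) | u <- take (index v (undup m)) (undup m)] v.
  move=> v; apply: gen_ge0 => //; apply: (okl_map (f := pr)) => u.
  by rewrite pr0 pr1.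
have AJ0 : 0 <= exp_latency d (@copy_loc R V pr) r (@copy_prob R V pr) shat.
  rewrite AJ; apply: sumr_ge0 => x _; apply: mulr_ge0 => //.
  exact: ltW (ppos (tag x)).
apply: (@le_trans _ _ (3 * exp_latency d (@copy_loc R V pr) r (@copy_prob R V pr) shat)).
  rewrite AI AJ.
  apply: (@le_trans _ _ (\sum_(v : V) ((ncopies pr v)%:R * p) *
      gen d r [seq (u, pr u) | u <- take (index v (undup m)) (undup m)] v)).
    by apply: ler_sum => v _; apply: ler_wpM2r => //; apply: tcop.
  have -> : \sum_(v : V) ((ncopies pr v)%:R * p) *
      gen d r [seq (u, pr u) | u <- take (index v (undup m)) (undup m)] v
    = \sum_(x : copyT pr) p * gen d r [seq (u, pr u) | u <- take (index (tag x) (undup m)) (undup m)] (tag x).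
    rewrite -(sig_big_dep xpredT (fun v (_ : 'I_(ncopies pr v)) => true)
       (fun v _ => p * gen d r [seq (u, pr u) | u <- take (index v (undup m)) (undup m)] v)) /=.
    by apply: eq_bigr => v _; rewrite sumr_const card_ord -[in RHS]mulr_natl mulrA.
  rewrite big_distrr; apply: ler_sum => x _ /=.
  rewrite mulrCA; apply: ler_wpM2l; first exact: ltW (ppos (tag x)).
  have jlt : (index x shat < size m)%N by rewrite size_map index_mem.
  have nthx : nth (tag x) m (index x shat) = tag x by rewrite (nth_map x) ?nth_index // index_mem.
  have cm : consec (tag x) m.
    move=> i j k ij jk ks; rewrite size_map in ks.
    rewrite !(nth_map x) //; [|exact: leq_ltn_trans jk ks|exact: leq_ltn_trans (leq_trans ij jk) ks].
    by move=> e; apply: (cs i j k ij jk ks x).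
  have Qh : forall u, u \in m -> pr u / 2 <= 1 - (1 - p) ^+ count_mem u m.
    move=> u _; rewrite /m count_copies //; apply: Qbound => //.
    - exact: ltW (ppos u).
    - exact: p1 u.
  have := main_comb dge0 dxx dsym dtri (ltW (ppos (tag x))) (p1 (tag x)) pr0 pr1
    (leqnn (size m)) cm Qh jlt r.
  by rewrite nthx.
apply: ler_wpM2r => //.
exact: K_ge3.
Qed.
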